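(* Let $k$ be a field of prime characteristic $p$. Define $T$-spaces of $k_0\langle X\rangle$ by $H_1=\{x_1^p\}^S$ and $H_{n+1}=(H_nH_1)^S$ for $n\ge1$. Then $(H_mH_n)^S=H_{m+n}$ for all $m,n\ge1$.
   Context: $X=\{x_1,x_2,\ldots\}$ is countably infinite; $k_0\langle X\rangle$ is the free associative (non-unital) $k$-algebra on $X$. A $T$-space is a $k$-subspace of $k_0\langle X\rangle$ invariant under every algebra endomorphism of $k_0\langle X\rangle$; $(A)^S$ is the $T$-space generated by a subset $A$. For subsets $A,B$, $AB=\{ab:a\in A,b\in B\}$. *)

(* Defs.v *)
From HB Require Import structures.
From mathcomp Require Import all_boot all_order all_algebra.
From mathcomp Require Import finmap.
Set Implicit Arguments.
Unset Strict Implicit.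
Unset Printing Implicit Defensive.
Import GRing.Theory.
Local Open Scope fset_scope.
Local Open Scope ring_scope.

(* Nonempty words over X = {x_0, x_1, x_2, ...} (variable x_i is the letter i):
   a word a w (first letter a, rest w). *)
Definition word := (nat * seq nat)%type.

Definition wcat (u v : word) : word := (u.1, u.2 ++ v.1 :: v.2).

(* k_0<X> : the free non-unital associative k-algebra on X, realized as
   finitely supported functions from nonempty words to k. *)
Definition FA (k : fieldType) := {fsfun word -> k with 0}.

Section FreeAlg.
Variable k : fieldType.

Definition fa0 : FA k := [fsfun].

Definition faadd (f g : FA k) : FA k :=
  [fsfun w in finsupp f `|` finsupp g => f w + g w].

Definition fascale (c : k) (f : FA k) : FA k :=
  [fsfun w in finsupp f => c * f w].

Definition famul (f g : FA k) : FA k :=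
  [fsfun w in [fset wcat u.1 u.2 | u in finsupp f `*` finsupp g] =>
     \sum_(u <- finsupp f `*` finsupp g | wcat u.1 u.2 == w) f u.1 * g u.2].

Definition favar (i : nat) : FA k := [fsfun w in [fset (i, [::])] => 1].

(* f ^ n for n >= 1 (f^0 is not defined in a non-unital algebra; we set it to f) *)
Definition fapow (f : FA k) (n : nat) : FA k := iter n.-1 (famul f) f.

Definition alg_endo (phi : FA k -> FA k) : Prop :=
  (forall f g, phi (faadd f g) = faadd (phi f) (phi g)) /\
  (forall c f, phi (fascale c f) = fascale c (phi f)) /\
  (forall f g, phi (famul f g) = famul (phi f) (phi g)).

Definition subspace (V : FA k -> Prop) : Prop :=
  V fa0 /\ (forall f g, V f -> V g -> V (faadd f g)) /\
  (forall c f, V f -> V (fascale c f)).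

Definition Tspace (V : FA k -> Prop) : Prop :=
  subspace V /\ forall phi, alg_endo phi -> forall f, V f -> V (phi f).

Definition Tgen (A : FA k -> Prop) : FA k -> Prop :=
  fun f => forall V, Tspace V -> (forall g, A g -> V g) -> V f.

Definition setmul (A B : FA k -> Prop) : FA k -> Prop :=
  fun f => exists a b, A a /\ B b /\ f = famul a b.

Definition H1 (p : nat) : FA k -> Prop := Tgen (fun f => f = fapow (favar 1) p).

(* Hrec p n = H_{n+1} *)
Fixpoint Hrec (p : nat) (n : nat) : FA k -> Prop :=
  match n with
  | 0 => H1 p
  | n'.+1 => Tgen (setmul (Hrec p n') (H1 p))
  end.

Definition H (p n : nat) : FA k -> Prop := Hrec p n.-1.

End FreeAlg.

(* Main.v *)
Require Import Defs.
From HB Require Import structures.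
From mathcomp Require Import all_boot all_order all_algebra.
From mathcomp Require Import finmap.
Set Implicit Arguments.
Unset Strict Implicit.
Unset Printing Implicit Defensive.
Import GRing.Theory.
Local Open Scope fset_scope.
Local Open Scope ring_scope.

Section S.
Variable k : fieldType.
Implicit Types f g h : FA k.

Lemma fa0E w : (fa0 k) w = 0.
Proof. by rewrite /fa0 fsfunE. Qed.

Lemma faaddE f g w : faadd f g w = f w + g w.
Proof.
rewrite /faadd fsfunE in_fsetU; case: ifP => // /negbT.
by rewrite negb_or => /andP[/fsfun_dflt -> /fsfun_dflt ->]; rewrite addr0.
Qed.

Lemma fascaleE c f w : fascale c f w = c * f w.
Proof.
rewrite /fascale fsfunE; case: ifP => // /negbT /fsfun_dflt ->; by rewrite mulr0.
Qed.

Lemma favarE i w : favar k i w = (w == (i, [::]))%:R.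
Proof. by rewrite /favar fsfunE in_fset1; case: eqP. Qed.

Lemma pairsum (A B : {fset word}) (F : word * word -> k) :
  \sum_(u <- A `*` B) F u = \sum_(a <- A) \sum_(b <- B) F (a, b).
Proof.
rewrite -big_allpairs; apply: perm_big; apply: uniq_perm.
- exact: fset_uniq.
- by rewrite allpairs_uniq ?fset_uniq // => -[? ?] [? ?] _ _ [-> ->].
move=> [a b]; rewrite in_fsetM /=; apply/idP/idP.
  by move=> /andP[ha hb]; apply/allpairsP; exists (a, b).
by case/allpairsP => -[x y] /= [hx hy [-> ->]]; rewrite hx hy.
Qed.

Lemma famulE f g (A B : {fset word}) w :
  finsupp f `<=` A -> finsupp g `<=` B ->
  famul f g w = \sum_(a <- A) \sum_(b <- B | wcat a b == w) f a * g b.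
Proof.
move=> hA hB.
have -> : famul f g w = \sum_(u <- finsupp f `*` finsupp g) (if wcat u.1 u.2 == w then f u.1 * g u.2 else 0).
  rewrite /famul fsfunE -big_mkcond; case: ifP => // /negbT hw.
  rewrite big1_fset // => u hu /eqP hwu; case/negP: hw; apply/imfsetP.
  by exists u.
rewrite (big_fset_incl _ (B := A `*` B)); last first.
- move=> u _; rewrite in_fsetM negb_and; case: ifP => // _.
  by case/orP => /fsfun_dflt ->; rewrite ?mulr0 ?mul0r.
- apply/fsubsetP => -[a b]; rewrite !in_fsetM /= => /andP[ha hb].
  by rewrite (fsubsetP hA _ ha) (fsubsetP hB _ hb).
by rewrite pairsum; apply: eq_bigr => a _; rewrite [RHS]big_mkcond.
Qed.

Lemma collapse (X : {fset word}) y (F : word -> k) :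
  y \in X -> \sum_(x <- X) (if y == x then F x else 0) = F y.
Proof.
move=> hy; rewrite (big_fsetD1 y) //= eqxx big1_fset ?addr0 // => x.
by rewrite in_fsetD1 => /andP[hxy _] _; rewrite eq_sym (negbTE hxy).
Qed.

Lemma fsupp_sub f (S : {fset word}) : (forall x, x \notin S -> f x = 0) ->
  finsupp f `<=` S.
Proof.
move=> h; apply/fsubsetP => x; rewrite mem_finsupp; apply: contraR => /h ->.
by rewrite eqxx.
Qed.

Lemma faext f g : (forall w, f w = g w) -> f = g.
Proof. by move=> h; apply/fsfunP. Qed.

Definition U2 f g := finsupp f `|` finsupp g.
Lemma U2l f g : finsupp f `<=` U2 f g. Proof. exact: fsubsetUl. Qed.
Lemma U2r f g : finsupp g `<=` U2 f g. Proof. exact: fsubsetUr. Qed.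
Lemma fsub_trans (A B C : {fset word}) : A `<=` B -> B `<=` C -> A `<=` C.
Proof. exact: fsubset_trans. Qed.

Lemma famulE' f g (A B : {fset word}) w :
  finsupp f `<=` A -> finsupp g `<=` B ->
  famul f g w = \sum_(a <- A) \sum_(b <- B) (if wcat a b == w then f a * g b else 0).
Proof. by move=> hA hB; rewrite (famulE w hA hB); apply: eq_bigr => a _; rewrite big_mkcond. Qed.

Lemma famulDl f g h : famul (faadd f g) h = faadd (famul f h) (famul g h).
Proof.
apply: faext => w; rewrite faaddE.
set A := finsupp (faadd f g) `|` (finsupp f `|` finsupp g).
have h1 : finsupp (faadd f g) `<=` A by apply: fsubsetUl.
have h2 : finsupp f `<=` A by apply: fsub_trans (fsubsetUl _ _) (fsubsetUr _ _).
have h3 : finsupp g `<=` A by apply: fsub_trans (fsubsetUr _ _) (fsubsetUr _ _).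
rewrite (famulE' w h1 (fsubset_refl _)) (famulE' w h2 (fsubset_refl _)) (famulE' w h3 (fsubset_refl _)).
rewrite -big_split; apply: eq_bigr => a _; rewrite -big_split; apply: eq_bigr => b _.
by rewrite faaddE; case: ifP => _; [exact: mulrDl | exact: (esym (addr0 0))].
Qed.

Lemma famulDr f g h : famul h (faadd f g) = faadd (famul h f) (famul h g).
Proof.
apply: faext => w; rewrite faaddE.
set A := finsupp (faadd f g) `|` (finsupp f `|` finsupp g).
have h1 : finsupp (faadd f g) `<=` A by apply: fsubsetUl.
have h2 : finsupp f `<=` A by apply: fsub_trans (fsubsetUl _ _) (fsubsetUr _ _).
have h3 : finsupp g `<=` A by apply: fsub_trans (fsubsetUr _ _) (fsubsetUr _ _).
rewrite (famulE' w (fsubset_refl _) h1) (famulE' w (fsubset_refl _) h2) (famulE' w (fsubset_refl _) h3).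
rewrite -big_split; apply: eq_bigr => a _; rewrite -big_split; apply: eq_bigr => b _.
by rewrite faaddE; case: ifP => _; [exact: mulrDr | exact: (esym (addr0 0))].
Qed.

Lemma famulZl c f g : famul (fascale c f) g = fascale c (famul f g).
Proof.
apply: faext => w; rewrite fascaleE.
rewrite (famulE' w (U2l (fascale c f) f) (fsubset_refl _)) (famulE' w (U2r (fascale c f) f) (fsubset_refl _)).
rewrite mulr_sumr; apply: eq_bigr => a _; rewrite mulr_sumr; apply: eq_bigr => b _.
by rewrite fascaleE; case: ifP; rewrite ?mulr0 // mulrA.
Qed.

Lemma famulZr c f g : famul f (fascale c g) = fascale c (famul f g).
Proof.
apply: faext => w; rewrite fascaleE.
rewrite (famulE' w (fsubset_refl _) (U2l _ g)) (famulE' w (fsubset_refl _) (U2r (fascale c g) _)).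
rewrite mulr_sumr; apply: eq_bigr => a _; rewrite mulr_sumr; apply: eq_bigr => b _.
by rewrite fascaleE; case: ifP; rewrite ?mulr0 // mulrCA.
Qed.

Lemma wcatA a b c : wcat (wcat a b) c = wcat a (wcat b c).
Proof. by rewrite /wcat /= -catA. Qed.

Lemma famul_triple f g h w (A B C : {fset word}) :
  finsupp f `<=` A -> finsupp g `<=` B -> finsupp h `<=` C ->
  famul (famul f g) h w = \sum_(a <- A) \sum_(b <- B) \sum_(c <- C)
     (if wcat (wcat a b) c == w then f a * g b * h c else 0).
Proof.
move=> hA hB hC.
set X := finsupp (famul f g) `|` [fset wcat u.1 u.2 | u in A `*` B].
rewrite (famulE' w (fsubsetUl _ _ : finsupp (famul f g) `<=` X) hC).
under eq_bigr => x _ do under eq_bigr => c _ do rewrite (famulE' x hA hB).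
have E : forall x c, (if wcat x c == w then (\sum_(a <- A) \sum_(b <- B)
   (if wcat a b == x then f a * g b else 0)) * h c else 0) =
   \sum_(a <- A) \sum_(b <- B) (if wcat a b == x then (if wcat x c == w then f a * g b * h c else 0) else 0).
  move=> x c; case: ifP => hxc.
    rewrite mulr_suml; apply: eq_bigr => a _; rewrite mulr_suml; apply: eq_bigr => b _.
    by case: ifP; rewrite ?mul0r.
  by rewrite big1 // => a _; rewrite big1 // => b _; case: ifP.
under eq_bigr => x _ do under eq_bigr => c _ do rewrite E.
under eq_bigr => x _ do rewrite exchange_big.
under eq_bigr => x _ do under eq_bigr => a _ do rewrite exchange_big.
rewrite exchange_big; apply: eq_big_seq => a ha.
rewrite exchange_big; apply: eq_big_seq => b hb.
rewrite exchange_big; apply: eq_bigr => c _.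
have hab : wcat a b \in X.
  rewrite in_fsetU; apply/orP; right; apply/imfsetP; exists (a, b) => //.
  by rewrite in_fsetM ha hb.
exact: (collapse (fun x => if wcat x c == w then f a * g b * h c else 0) hab).
Qed.

Lemma famul_triple' f g h w (A B C : {fset word}) :
  finsupp f `<=` A -> finsupp g `<=` B -> finsupp h `<=` C ->
  famul f (famul g h) w = \sum_(a <- A) \sum_(b <- B) \sum_(c <- C)
     (if wcat a (wcat b c) == w then f a * g b * h c else 0).
Proof.
move=> hA hB hC.
set Y := finsupp (famul g h) `|` [fset wcat u.1 u.2 | u in B `*` C].
rewrite (famulE' w hA (fsubsetUl _ _ : finsupp (famul g h) `<=` Y)).
apply: eq_bigr => a _.
have E : forall y, (if wcat a y == w then f a * (\sum_(b <- B) \sum_(c <- C)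
   (if wcat b c == y then g b * h c else 0)) else 0) =
   \sum_(b <- B) \sum_(c <- C) (if wcat b c == y then (if wcat a y == w then f a * g b * h c else 0) else 0).
  move=> y; case: ifP => hxc.
    rewrite mulr_sumr; apply: eq_bigr => b _; rewrite mulr_sumr; apply: eq_bigr => c _.
    by case: ifP; rewrite ?mulr0 // mulrA.
  by rewrite big1 // => b _; rewrite big1 // => c _; case: ifP.
under eq_bigr => y _ do rewrite (famulE' y hB hC) E.
rewrite exchange_big; apply: eq_big_seq => b hb.
rewrite exchange_big; apply: eq_big_seq => c hc.
have hbc : wcat b c \in Y.
  rewrite in_fsetU; apply/orP; right; apply/imfsetP; exists (b, c) => //.
  by rewrite in_fsetM hb hc.
exact: (collapse (fun y => if wcat a y == w then f a * g b * h c else 0) hbc).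
Qed.

Lemma famulA f g h : famul (famul f g) h = famul f (famul g h).
Proof.
apply: faext => w.
rewrite (famul_triple w (fsubset_refl _) (fsubset_refl _) (fsubset_refl _)).
rewrite (famul_triple' w (fsubset_refl _) (fsubset_refl _) (fsubset_refl _)).
by under eq_bigr => a _ do under eq_bigr => b _ do under eq_bigr => c _ do rewrite wcatA.
Qed.

Definition fsum (I : Type) (s : seq I) (F : I -> FA k) : FA k :=
  foldr (fun a acc => faadd (F a) acc) (fa0 k) s.

Lemma fsumE (I : Type) (s : seq I) F x : fsum s F x = \sum_(a <- s) F a x.
Proof.
elim: s => [|a s IH]; first by rewrite big_nil fa0E.
by rewrite big_cons /= faaddE IH.
Qed.

Lemma eq_fsum (I : Type) (s : seq I) (F G : I -> FA k) :
  (forall a, F a = G a) -> fsum s F = fsum s G.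
Proof. by move=> e; elim: s => [|a s IH] //=; rewrite e IH. Qed.

Lemma eq_fsum_in (I : eqType) (s : seq I) (F G : I -> FA k) :
  (forall a, a \in s -> F a = G a) -> fsum s F = fsum s G.
Proof.
elim: s => [|a s IH] e //=; rewrite e ?inE ?eqxx // IH // => b hb.
by apply: e; rewrite inE hb orbT.
Qed.

Lemma finsupp0' : finsupp (fa0 k) `<=` fset0.
Proof. by apply: fsupp_sub => x _; rewrite fa0E. Qed.

Lemma famul0l g : famul (fa0 k) g = fa0 k.
Proof.
apply: faext => w; rewrite fa0E (famulE' w finsupp0' (fsubset_refl _)).
by rewrite big_seq_fset0.
Qed.

Lemma famul0r g : famul g (fa0 k) = fa0 k.
Proof.
apply: faext => w; rewrite fa0E (famulE' w (fsubset_refl _) finsupp0').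
by rewrite big1 // => a _; rewrite big_seq_fset0.
Qed.

Lemma famul_fsuml (I : Type) (s : seq I) F g :
  famul (fsum s F) g = fsum s (fun a => famul (F a) g).
Proof. by elim: s => [|a s IH] /=; rewrite ?famul0l // famulDl IH. Qed.

Lemma famul_fsumr (I : Type) (s : seq I) F g :
  famul g (fsum s F) = fsum s (fun a => famul g (F a)).
Proof. by elim: s => [|a s IH] /=; rewrite ?famul0r // famulDr IH. Qed.

Lemma endo0 phi : alg_endo phi -> phi (fa0 k) = fa0 k.
Proof.
move=> [hadd _].
have e : faadd (fa0 k) (fa0 k) = fa0 k by apply: faext => w; rewrite faaddE fa0E addr0.
have := hadd (fa0 k) (fa0 k); rewrite e => /(congr1 (fun f => f)) h.
apply: faext => w; rewrite fa0E.
have := congr1 (fun f : FA k => f w) h; rewrite faaddE => hy.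
by apply: (@addrI _ (phi (fa0 k) w)); rewrite -hy addr0.
Qed.

Lemma endo_fsum phi (I : Type) (s : seq I) F : alg_endo phi ->
  phi (fsum s F) = fsum s (fun a => phi (F a)).
Proof.
move=> he; elim: s => [|a s IH] /=; first exact: endo0.
by case: he => [hadd _]; rewrite hadd IH.
Qed.

Definition mon (sg : nat -> FA k) (w : word) : FA k :=
  foldl (fun acc i => famul acc (sg i)) (sg w.1) w.2.

Lemma foldl_mul (sg : nat -> FA k) m s (l : seq nat) :
  foldl (fun acc i => famul acc (sg i)) (famul m s) l =
  famul m (foldl (fun acc i => famul acc (sg i)) s l).
Proof.
elim: l s => [|i l IH] s //=.
by rewrite famulA IH.
Qed.

Lemma mon_cat (sg : nat -> FA k) a b : mon sg (wcat a b) = famul (mon sg a) (mon sg b).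
Proof.
by rewrite /mon /wcat /= foldl_cat /= foldl_mul.
Qed.

Lemma endo_mon phi (sg : nat -> FA k) w : alg_endo phi ->
  phi (mon sg w) = mon (fun i => phi (sg i)) w.
Proof.
move=> [_ [_ hmul]]; case: w => a l; rewrite /mon /=.
elim/last_ind: l => [|l b IH] //=.
by rewrite !foldl_rcons hmul IH.
Qed.

Definition evs (sg : nat -> FA k) (f : FA k) : FA k :=
  fsum (finsupp f) (fun w => fascale (f w) (mon sg w)).

Lemma sum_incl (h : FA k) (S : {fset word}) (M : word -> k) :
  finsupp h `<=` S ->
  \sum_(w <- finsupp h) h w * M w = \sum_(w <- S) h w * M w.
Proof.
move=> hS; apply: big_fset_incl => // x _ /fsfun_dflt ->; by rewrite mul0r.
Qed.

Lemma evsE sg f (S : {fset word}) x : finsupp f `<=` S ->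
  evs sg f x = \sum_(w <- S) f w * mon sg w x.
Proof.
move=> hS; rewrite /evs fsumE -(sum_incl (fun w => mon sg w x) hS).
by apply: eq_bigr => w _; rewrite fascaleE.
Qed.

Lemma evs_add sg f g : evs sg (faadd f g) = faadd (evs sg f) (evs sg g).
Proof.
apply: faext => x; rewrite faaddE.
set A := finsupp (faadd f g) `|` (finsupp f `|` finsupp g).
have h1 : finsupp (faadd f g) `<=` A by apply: fsubsetUl.
have h2 : finsupp f `<=` A by apply: fsub_trans (fsubsetUl _ _) (fsubsetUr _ _).
have h3 : finsupp g `<=` A by apply: fsub_trans (fsubsetUr _ _) (fsubsetUr _ _).
rewrite (evsE sg x h1) (evsE sg x h2) (evsE sg x h3) -big_split.
by apply: eq_bigr => w _; rewrite faaddE mulrDl.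
Qed.

Lemma evs_scale sg c f : evs sg (fascale c f) = fascale c (evs sg f).
Proof.
apply: faext => x; rewrite fascaleE.
rewrite (evsE sg x (U2l (fascale c f) f)) (evsE sg x (U2r (fascale c f) f)) mulr_sumr.
by apply: eq_bigr => w _; rewrite fascaleE mulrA.
Qed.

Lemma evs_mul sg f g : evs sg (famul f g) = famul (evs sg f) (evs sg g).
Proof.
apply: faext => x.
set A := finsupp f; set B := finsupp g.
set W := finsupp (famul f g) `|` [fset wcat u.1 u.2 | u in A `*` B].
rewrite (evsE sg x (fsubsetUl _ _ : finsupp (famul f g) `<=` W)).
have -> : famul (evs sg f) (evs sg g) =
  fsum A (fun a => fsum B (fun b => fascale (f a * g b) (famul (mon sg a) (mon sg b)))).
  rewrite /evs famul_fsuml; apply: eq_fsum => a.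
  rewrite famul_fsumr; apply: eq_fsum => b.
  rewrite famulZl famulZr.
  by apply: faext => y; rewrite !fascaleE mulrA.
rewrite fsumE.
under eq_bigr => w _ do rewrite (famulE' w (fsubset_refl _) (fsubset_refl _)) mulr_suml.
rewrite exchange_big; apply: eq_big_seq => a ha; rewrite fsumE.
under eq_bigr => w _ do rewrite mulr_suml.
rewrite exchange_big; apply: eq_big_seq => b hb.
have hab : wcat a b \in W.
  rewrite in_fsetU; apply/orP; right; apply/imfsetP; exists (a, b) => //.
  by rewrite in_fsetM ha hb.
rewrite fascaleE -mon_cat.
rewrite -(collapse (fun w => f a * g b * mon sg w x) hab).
by apply: eq_bigr => w _; case: ifP => _; rewrite ?mul0r.
Qed.

Lemma evs_endo sg : alg_endo (evs sg).
Proof. split; [exact: evs_add | split; [exact: evs_scale | exact: evs_mul]]. Qed.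

Lemma evs_var sg i : evs sg (favar k i) = sg i.
Proof.
apply: faext => x.
have hs : finsupp (favar k i) `<=` [fset (i, [::])].
  by apply: fsupp_sub => y; rewrite in_fset1 favarE => /negbTE ->.
by rewrite (evsE sg x hs) big_seq_fset1 favarE eqxx mul1r.
Qed.

Lemma mon_delta w x : mon (favar k) w x = (x == w)%:R.
Proof.
case: w => a l; elim/last_ind: l x => [|l b IH] x; first by rewrite /mon /= favarE.
have -> : mon (favar k) (a, rcons l b) = famul (mon (favar k) (a, l)) (favar k b).
  by rewrite /mon /= foldl_rcons.
have h1 : finsupp (mon (favar k) (a, l)) `<=` [fset (a, l)].
  by apply: fsupp_sub => y; rewrite in_fset1 IH => /negbTE ->.
have h2 : finsupp (favar k b) `<=` [fset (b, [::])].
  by apply: fsupp_sub => y; rewrite in_fset1 favarE => /negbTE ->.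
rewrite (famulE' x h1 h2) !big_seq_fset1 IH favarE !eqxx mulr1 /wcat /= cats1.
by rewrite eq_sym; case: eqP.
Qed.

Lemma evs_id f : evs (favar k) f = f.
Proof.
apply: faext => x; rewrite (evsE _ x (fsubsetUl (finsupp f) [fset x])).
under eq_bigr => w _ do rewrite mon_delta.
rewrite (big_fsetD1 x) /=; last by rewrite in_fsetU in_fset1 eqxx orbT.
rewrite eqxx mulr1 big1_fset ?addr0 // => w.
by rewrite in_fsetD1 => /andP[hw _] _; rewrite eq_sym (negbTE hw) mulr0.
Qed.

Lemma endo_evs phi f : alg_endo phi -> phi f = evs (fun i => phi (favar k i)) f.
Proof.
move=> he; rewrite -{1}(evs_id f) /evs endo_fsum //; apply: eq_fsum => w.
case: he => [hadd [hsc hmul]]; rewrite hsc endo_mon //.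
Qed.

Lemma mon_eq (sg tau : nat -> FA k) w :
  (forall i, i \in w.1 :: w.2 -> sg i = tau i) -> mon sg w = mon tau w.
Proof.
case: w => a l /= h; rewrite /mon /=.
elim/last_ind: l h => [|l b IH] h; first by rewrite h // inE eqxx.
rewrite !foldl_rcons IH; last first.
  move=> i; rewrite inE => /orP[/eqP ->|hi]; first by apply: h; rewrite inE eqxx.
  by apply: h; rewrite inE mem_rcons inE hi !orbT.
by rewrite h // inE mem_rcons inE eqxx orbT.
Qed.

Definition bnd (f : FA k) : nat := (\max_(w <- finsupp f) \max_(i <- w.1 :: w.2) i.+1)%N.

Lemma bndP f w i : w \in finsupp f -> i \in w.1 :: w.2 -> (i < bnd f)%N.
Proof.
move=> hw hi; rewrite /bnd.
apply: (leq_trans _ (@leq_bigmax_seq _ _ xpredT (fun w : word => \max_(i <- w.1 :: w.2) i.+1) w hw isT)).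
exact: (@leq_bigmax_seq _ _ xpredT (fun i => i.+1) i hi isT).
Qed.

Lemma endo_eq phi psi f : alg_endo phi -> alg_endo psi ->
  (forall i, (i < bnd f)%N -> phi (favar k i) = psi (favar k i)) -> phi f = psi f.
Proof.
move=> hp hq h; rewrite (endo_evs f hp) (endo_evs f hq) /evs.
apply: eq_fsum_in => w hw.
rewrite (@mon_eq (fun i => phi (favar k i)) (fun i => psi (favar k i))) // => i hi.
exact: h (bndP hw hi).
Qed.

Lemma Tgen_incl (A : FA k -> Prop) g : A g -> Tgen A g.
Proof. by move=> hg V _ hV; apply: hV. Qed.

Lemma Tgen_T (A : FA k -> Prop) : Tspace (Tgen A).
Proof.
split; [split; [|split]|].
- by move=> V [[h0 _] _] _.
- by move=> f g hf hg V hV hA; have [[_ [hadd _]] _] := hV; apply: hadd; [apply: hf|apply: hg].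
- by move=> c f hf V hV hA; have [[_ [_ hsc]] _] := hV; apply: hsc; apply: hf.
- by move=> phi he f hf V hV hA; have [_ hend] := hV; apply: hend => //; apply: hf.
Qed.

Lemma Tgen_min (A V : FA k -> Prop) : Tspace V -> (forall g, A g -> V g) ->
  forall f, Tgen A f -> V f.
Proof. by move=> hV hA f hf; apply: hf. Qed.

Lemma endo_comp phi psi : alg_endo phi -> alg_endo psi -> alg_endo (fun f => phi (psi f)).
Proof.
move=> [a1 [s1 m1]] [a2 [s2 m2]]; split; [|split] => *.
- by rewrite a2 a1.
- by rewrite s2 s1.
- by rewrite m2 m1.
Qed.

Lemma endo_id : alg_endo (fun f : FA k => f).
Proof. by split; [|split]. Qed.

Definition shiftN (N : nat) := evs (fun i => favar k (N + i)).
Definition chiN (N : nat) (phi : FA k -> FA k) :=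
  evs (fun j => if (j < N)%N then phi (favar k j) else favar k (j - N)).

Lemma chi_shift N phi f : chiN N phi (shiftN N f) = f.
Proof.
have := @endo_eq (fun f => chiN N phi (shiftN N f)) (fun f => f) f.
apply.
- exact: endo_comp (evs_endo _) (evs_endo _).
- exact: endo_id.
move=> i _; rewrite /shiftN /chiN evs_var evs_var.
by rewrite ltnNge leq_addr /= addKn.
Qed.

Lemma chi_phi phi f : alg_endo phi -> chiN (bnd f) phi f = phi f.
Proof.
move=> he; apply: endo_eq => //; first exact: evs_endo.
by move=> i hi; rewrite /chiN evs_var hi.
Qed.

Lemma L1 (U W X : FA k -> Prop) : Tspace U -> Tspace X ->
  (forall u w, U u -> W w -> X (famul u w)) ->
  forall u b, U u -> Tgen W b -> X (famul u b).
Proof.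
move=> hU hX hUW u b hu hb.
pose Y := fun b => forall u, U u -> X (famul u b).
suff : Y b by apply.
apply: (Tgen_min (V := Y)) hb; last by move=> g hg v hv; apply: hUW.
case: hX => [[hX0 [hXa hXs]] hXe].
split; [split; [|split]|].
- by move=> v _; rewrite famul0r.
- by move=> f g hf hg v hv; rewrite famulDr; apply: hXa; [apply: hf|apply: hg].
- by move=> c f hf v hv; rewrite famulZr; apply: hXs; apply: hf.
move=> phi he f hf v hv.
set N := bnd f.
have hv' : U (shiftN N v) by case: hU => [_ hUe]; apply: hUe => //; apply: evs_endo.
have := hXe (chiN N phi) (evs_endo _) _ (hf _ hv').
case: (evs_endo (fun j => if (j < N)%N then phi (favar k j) else favar k (j - N))) => [_ [_ hm]].
by rewrite /chiN hm -/(chiN N phi) chi_shift chi_phi.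
Qed.

Lemma L1' (A W X : FA k -> Prop) : Tspace W -> Tspace X ->
  (forall a w, A a -> W w -> X (famul a w)) ->
  forall a w, Tgen A a -> W w -> X (famul a w).
Proof.
move=> hW hX hAW a w ha hw.
pose Y := fun a => forall w, W w -> X (famul a w).
suff : Y a by apply.
apply: (Tgen_min (V := Y)) ha; last by move=> g hg v hv; apply: hAW.
case: hX => [[hX0 [hXa hXs]] hXe].
split; [split; [|split]|].
- by move=> v _; rewrite famul0l.
- by move=> f g hf hg v hv; rewrite famulDl; apply: hXa; [apply: hf|apply: hg].
- by move=> c f hf v hv; rewrite famulZl; apply: hXs; apply: hf.
move=> phi he f hf v hv.
set N := bnd f.
have hv' : W (shiftN N v) by case: hW => [_ hWe]; apply: hWe => //; apply: evs_endo.
have := hXe (chiN N phi) (evs_endo _) _ (hf _ hv').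
case: (evs_endo (fun j => if (j < N)%N then phi (favar k j) else favar k (j - N))) => [_ [_ hm]].
by rewrite /chiN hm -/(chiN N phi) chi_shift chi_phi.
Qed.
End S.

Lemma Hsucc {k : fieldType} p n : (1 <= n)%N ->
  forall f, H p n.+1 f <-> Tgen (setmul (H p n) (H (k:=k) p 1)) f.
Proof. by case: n. Qed.

Lemma H_T {k : fieldType} p n : Tspace (H (k:=k) p n).
Proof. rewrite /H; case: n.-1 => [|n0]; exact: Tgen_T. Qed.

Theorem lemma4p2 (k : fieldType) (p : nat) (hp : (p \in [pchar k])%R)
  (m n : nat) (hm : (1 <= m)%N) (hn : (1 <= n)%N) :
  forall f : FA k, Tgen (setmul (H p m) (H p n)) f <-> H p (m + n) f.
Proof.
case: n hn => // n0 _.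
elim: n0 => [|n IH] f.
  by rewrite addn1; split => /(Hsucc p hm) .
have hmn : (1 <= m + n.+1)%N by rewrite addnS.
rewrite addnS; split.
- move=> hf; apply/(Hsucc p hmn).
  apply: (Tgen_min (Tgen_T _)) hf => g [a [b [ha [hb ->]]]].
  have hb' := (proj1 (Hsucc p (isT : (1 <= n.+1)%N) b) hb).
  apply: (L1 (H_T p m) (Tgen_T _) _ ha hb') => u w hu [h [c [hh [hc ->]]]].
  rewrite -famulA; apply: Tgen_incl; red; exists (famul u h), c; split => //.
  by apply/IH; apply: Tgen_incl; red; exists u, h.
- move=> /(Hsucc p hmn) hf.
  apply: (Tgen_min (Tgen_T _)) hf => g [a [c [ha [hc ->]]]].
  have ha' := proj2 (IH a) ha.
  apply: (L1' (H_T p 1) (Tgen_T _) _ ha' hc) => a' w [u [h [hu [hh ->]]]] hw.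
  rewrite famulA; apply: Tgen_incl; red; exists u, (famul h w); split => //.
  split => //; apply: (proj2 (Hsucc p (isT : (1 <= n.+1)%N) _)); apply: Tgen_incl; red; exists h, w; split => //; split.
Qed.
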